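(* Let $X$ be a compact metric space and let $f\colon X\to X$ be an $n$-expansive homeomorphism with the L-shadowing property. Then there exists $\varepsilon>0$ such that $\bar{n}(x,\varepsilon)\cdot n(x,\varepsilon)\leq n$ for every $x\in X$. If, in addition, $f$ is transitive, then $\bar{n}(x,\varepsilon)\cdot n(y,\varepsilon)\leq n$ for every $x,y\in X$.
   Context: Let $(X,d)$ be a compact metric space and $f\colon X\to X$ a homeomorphism. For $x\in X$ and $c>0$: $W^s_c(x)=\{y: d(f^k(y),f^k(x))\leq c\ \forall k\geq0\}$, $W^u_c(x)=\{y: d(f^k(y),f^k(x))\leq c\ \forall k\leq0\}$, $W^s(x)=\{y: d(f^k(y),f^k(x))\to0 \text{ as } k\to\infty\}$, $W^u(x)=\{y: d(f^k(y),f^k(x))\to0 \text{ as } k\to-\infty\}$. $f$ is $n$-expansive if there is $c>0$ such that $W^s_c(x)\cap W^u_c(x)$ has at most $n$ points for every $x\in X$. The number $n(x,\varepsilon)$ of different stable sets in $W^s_\varepsilon(x)$ is the largest cardinality of a subset $E\subset W^s_\varepsilon(x)$ such that any two distinct $y,z\in E$ satisfy $y\notin W^s(z)$ (so any $n(x,\varepsilon)+1$ distinct points of $W^s_\varepsilon(x)$ contain two distinct points in the same stable set). Analogously $\bar n(x,\varepsilon)$ is the largest cardinality of a subset of $W^u_\varepsilon(x)$ whose distinct points lie in pairwise different unstable sets. A $\delta$-pseudo orbit is $(x_k)_{k\in\mathbb{Z}}$ with $d(f(x_k),x_{k+1})<\delta$ for all $k$; a two-sided limit pseudo orbit satisfies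 $d(f(x_k),x_{k+1})\to0$ as $|k|\to\infty$. $z$ $\varepsilon$-shadows $(x_k)$ if $d(f^k(z),x_k)<\varepsilon$ for all $k$, and two-sided limit shadows it if $d(f^k(z),x_k)\to0$ as $|k|\to\infty$. $f$ has the L-shadowing property if for every $\varepsilon>0$ there is $\delta>0$ such that every $\delta$-pseudo orbit that is also a two-sided limit pseudo orbit is both $\varepsilon$-shadowed and two-sided limit shadowed by a single point. $f$ is transitive if for every nonempty open $U,V$ there is $k\in\mathbb{N}$ with $f^k(U)\cap V\neq\emptyset$. *)

(* Defs.v *)
From Stdlib Require Import Reals Lra Lia ZArith List.
Open Scope R_scope.

Definition is_metric (X : Type) (d : X -> X -> R) : Prop :=
  (forall x y, d x y = 0 <-> x = y) /\
  (forall x y, d x y = d y x) /\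
  (forall x y z, d x z <= d x y + d y z).

Definition is_open {X : Type} (d : X -> X -> R) (U : X -> Prop) : Prop :=
  forall x, U x -> exists r, 0 < r /\ forall y, d x y < r -> U y.

Definition is_compact {X : Type} (d : X -> X -> R) : Prop :=
  forall (I : Type) (U : I -> X -> Prop),
    (forall i, is_open d (U i)) -> (forall x, exists i, U i x) ->
    exists l : list I, forall x, exists i, In i l /\ U i x.

Definition continuous_map {X : Type} (d : X -> X -> R) (f : X -> X) : Prop :=
  forall x e, 0 < e -> exists r, 0 < r /\ forall y, d x y < r -> d (f x) (f y) < e.

Definition homeo_with_inv {X : Type} (d : X -> X -> R) (f g : X -> X) : Prop :=
  continuous_map d f /\ continuous_map d g /\
  (forall x, g (f x) = x) /\ (forall x, f (g x) = x).

Definition iterZ {X : Type} (f g : X -> X) (k : Z) (x : X) : X :=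
  match k with
  | Z0 => x
  | Zpos p => Nat.iter (Pos.to_nat p) f x
  | Zneg p => Nat.iter (Pos.to_nat p) g x
  end.

Section Dyn.
Context {X : Type} (d : X -> X -> R) (f g : X -> X).

Definition Ws_c (c : R) (x y : X) : Prop :=
  forall k : Z, (0 <= k)%Z -> d (iterZ f g k y) (iterZ f g k x) <= c.
Definition Wu_c (c : R) (x y : X) : Prop :=
  forall k : Z, (k <= 0)%Z -> d (iterZ f g k y) (iterZ f g k x) <= c.
Definition Ws (x y : X) : Prop :=
  forall e, 0 < e -> exists N : Z, forall k : Z, (N <= k)%Z ->
    d (iterZ f g k y) (iterZ f g k x) < e.
Definition Wu (x y : X) : Prop :=
  forall e, 0 < e -> exists N : Z, forall k : Z, (k <= N)%Z ->
    d (iterZ f g k y) (iterZ f g k x) < e.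

Definition n_expansive (n : nat) : Prop :=
  exists c, 0 < c /\ forall x (E : list X), NoDup E ->
    (forall y, In y E -> Ws_c c x y /\ Wu_c c x y) -> (length E <= n)%nat.

(* k is the largest cardinality of a finite set (duplicate-free list) with property P *)
Definition is_max_card (P : list X -> Prop) (k : nat) : Prop :=
  (exists E, NoDup E /\ P E /\ length E = k) /\
  (forall E, NoDup E -> P E -> (length E <= k)%nat).

Definition n_stable (x : X) (eps : R) (k : nat) : Prop :=
  is_max_card (fun E => (forall y, In y E -> Ws_c eps x y) /\
     forall y z, In y E -> In z E -> y <> z -> ~ Ws z y) k.
Definition n_unstable (x : X) (eps : R) (k : nat) : Prop :=
  is_max_card (fun E => (forall y, In y E -> Wu_c eps x y) /\
     forall y z, In y E -> In z E -> y <> z -> ~ Wu z y) k.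

Definition pseudo_orbit (delta : R) (xs : Z -> X) : Prop :=
  forall k, d (f (xs k)) (xs (k + 1)%Z) < delta.

Definition limit_pseudo_orbit (xs : Z -> X) : Prop :=
  forall e, 0 < e -> exists N : Z, forall k : Z, (N <= Z.abs k)%Z ->
    d (f (xs k)) (xs (k + 1)%Z) < e.

Definition L_shadowing : Prop :=
  forall eps, 0 < eps -> exists delta, 0 < delta /\
    forall xs : Z -> X, pseudo_orbit delta xs -> limit_pseudo_orbit xs ->
      exists z,
        (forall k, d (iterZ f g k z) (xs k) < eps) /\
        (forall e, 0 < e -> exists N : Z, forall k : Z, (N <= Z.abs k)%Z ->
           d (iterZ f g k z) (xs k) < e).

Definition transitive : Prop :=
  forall U V : X -> Prop, is_open d U -> is_open d V ->
    (exists x, U x) -> (exists x, V x) ->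
    exists k : nat, (1 <= k)%nat /\ exists x, U x /\ V (Nat.iter k f x).

End Dyn.

(* Main.v *)
Require Import Defs.
From Stdlib Require Import Reals ZArith List Lra Lia Classical ClassicalEpsilon FinFun.
Import ListNotations.
Open Scope R_scope.

Lemma met_refl X d (x : X) : is_metric X d -> d x x = 0.
Proof. intros [H _]. apply H. reflexivity. Qed.

Lemma met_sym X d (x y : X) : is_metric X d -> d x y = d y x.
Proof. intros [_ [H _]]. apply H. Qed.

Lemma met_tri X d (x y z : X) : is_metric X d -> d x z <= d x y + d y z.
Proof. intros [_ [_ H]]. apply H. Qed.

Lemma met_pos X d (x y : X) : is_metric X d -> 0 <= d x y.
Proof. intros M. pose proof (met_tri X d x y x M). rewrite (met_refl X d x M) in H.
  rewrite (met_sym X d y x M) in H. lra. Qed.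

Lemma iterZ_nonneg X (f g : X -> X) k z : (0 <= k)%Z -> iterZ f g k z = Nat.iter (Z.to_nat k) f z.
Proof. intros H. destruct k; simpl; try reflexivity. lia. Qed.

Lemma iterZ_nonpos X (f g : X -> X) k z : (k <= 0)%Z -> iterZ f g k z = Nat.iter (Z.to_nat (- k)) g z.
Proof. intros H. destruct k; simpl; try reflexivity. lia. Qed.

Lemma iterZ_succ X (f g : X -> X) k z : (forall x, f (g x) = x) ->
  iterZ f g (k + 1) z = f (iterZ f g k z).
Proof.
  intros Hfg. destruct (Z_le_gt_dec 0 k).
  - rewrite !iterZ_nonneg by lia.
    replace (Z.to_nat (k+1)) with (S (Z.to_nat k)) by lia. reflexivity.
  - rewrite !iterZ_nonpos by lia.
    replace (Z.to_nat (- k)) with (S (Z.to_nat (- (k+1)))) by lia. simpl. now rewrite Hfg.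
Qed.

Lemma max_exists (Q : nat -> Prop) n : (exists j, Q j) -> (forall j, Q j -> (j <= n)%nat) ->
  exists k, Q k /\ forall j, Q j -> (j <= k)%nat.
Proof.
  induction n; intros [j Hj] Hb.
  - exists j. split; auto. intros j' H'. pose proof (Hb _ Hj); pose proof (Hb _ H'). lia.
  - destruct (classic (Q (S n))) as [HQ|HQ].
    + exists (S n). auto.
    + apply IHn. eauto. intros j' H'. pose proof (Hb _ H'). destruct (Nat.eq_dec j' (S n)).
      subst; contradiction. lia.
Qed.

Lemma NoDup_prod {A B} (E : list A) (F : list B) : NoDup E -> NoDup F -> NoDup (list_prod E F).
Proof.
  intros HE HF. induction HE as [|a E HaE HE IH]; simpl. constructor.
  apply NoDup_app; auto.
  - apply FinFun.Injective_map_NoDup; auto. intros b b' H; now inversion H.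
  - intros [a' b] H1 H2. apply in_map_iff in H1. destruct H1 as [b'' [Heq _]]. inversion Heq; subst.
    apply in_prod_iff in H2. tauto.
Qed.

Definition xs {X} (f g : X -> X) (p u q : X) (N : Z) (k : Z) : X :=
  if (k <? 0)%Z then iterZ f g k p else if (k <? N)%Z then iterZ f g k u else iterZ f g (k - N) q.

Lemma xs_step X (f g : X -> X) p u q N k : (forall x, f (g x) = x) -> (0 <= N)%Z ->
  k <> (-1)%Z -> k <> (N - 1)%Z -> f (xs f g p u q N k) = xs f g p u q N (k + 1).
Proof.
  intros Hfg HN H1 H2. unfold xs.
  destruct (Z.ltb_spec k 0); destruct (Z.ltb_spec (k+1) 0);
  destruct (Z.ltb_spec k N); destruct (Z.ltb_spec (k+1) N); try lia;
  rewrite <- iterZ_succ by auto; try reflexivity.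
  f_equal. lia.
Qed.

Lemma xs_pseudo X d (f g : X -> X) x y p u q N eps dl :
  is_metric X d -> (forall x, f (g x) = x) -> (0 <= N)%Z -> 0 < dl -> eps <= dl / 8 ->
  Wu_c d f g eps x p -> Ws_c d f g eps y q -> d x u < dl / 4 -> d (iterZ f g N u) y < dl / 4 ->
  pseudo_orbit d f dl (xs f g p u q N).
Proof.
  intros M Hfg HN Hdl He Hp Hq Hu HuN k.
  assert (Hp0 : d p x <= eps) by (apply (Hp 0%Z); lia).
  assert (Hq0 : d q y <= eps) by (apply (Hq 0%Z); lia).
  rewrite (met_sym X d q y M) in Hq0.
  destruct (Z.eq_dec k (-1)) as [E1|E1].
  - subst k. replace (xs f g p u q N (-1)) with (g p) by reflexivity. rewrite Hfg.
    replace (-1+1)%Z with 0%Z by lia.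
    unfold xs. change (0 <? 0)%Z with false. cbv iota.
    destruct (Z.ltb_spec 0 N).
    + simpl. pose proof (met_tri X d p x u M). lra.
    + assert (N = 0%Z) by lia. subst N. simpl. simpl in HuN.
      pose proof (met_tri X d p x u M). pose proof (met_tri X d p u q M).
      pose proof (met_tri X d u y q M). lra.
  - destruct (Z.eq_dec k (N - 1)) as [E2|E2].
    + subst k. unfold xs. destruct (Z.ltb_spec (N-1) 0); try lia.
      destruct (Z.ltb_spec (N-1) N); try lia.
      destruct (Z.ltb_spec (N-1+1) 0); try lia.
      destruct (Z.ltb_spec (N-1+1) N); try lia.
      rewrite <- iterZ_succ by auto. replace (N-1+1)%Z with N by lia.
      replace (N - N)%Z with 0%Z by lia. simpl.
      pose proof (met_tri X d (iterZ f g N u) y q M). lra.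
    + rewrite xs_step by auto. rewrite met_refl by auto. lra.
Qed.

Lemma xs_limit X d (f g : X -> X) p u q N :
  is_metric X d -> (forall x, f (g x) = x) -> (0 <= N)%Z ->
  limit_pseudo_orbit d f (xs f g p u q N).
Proof.
  intros M Hfg HN e He. exists (N + 2)%Z. intros k Hk.
  rewrite xs_step by (auto; lia). rewrite met_refl by auto. lra.
Qed.

Lemma xs_close X d (f g : X -> X) x y p u q N eps k :
  is_metric X d -> 0 <= eps -> (0 <= N)%Z ->
  Wu_c d f g eps x p -> Ws_c d f g eps y q ->
  d (xs f g p u q N k) (xs f g x u y N k) <= eps.
Proof.
  intros M He HN Hp Hq. unfold xs.
  destruct (Z.ltb_spec k 0). apply Hp; lia.
  destruct (Z.ltb_spec k N). rewrite met_refl by auto; lra.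
  apply Hq; lia.
Qed.

Definition Shad {X} d (f g : X -> X) (s : R) (ys : Z -> X) (z : X) : Prop :=
  (forall k, d (iterZ f g k z) (ys k) < s) /\
  (forall e, 0 < e -> exists N : Z, forall k : Z, (N <= Z.abs k)%Z ->
           d (iterZ f g k z) (ys k) < e).

Lemma shad_inj X d (f g : X -> X) s p u q p' q' N z :
  is_metric X d -> (0 <= N)%Z ->
  Shad d f g s (xs f g p u q N) z -> Shad d f g s (xs f g p' u q' N) z ->
  Wu d f g p' p /\ Ws d f g q' q.
Proof.
  intros M HN [_ H1] [_ H2]. split.
  - intros e He. destruct (H1 (e/2)) as [N1 HN1]; try lra.
    destruct (H2 (e/2)) as [N2 HN2]; try lra.
    exists (- (Z.max 0 (Z.max N1 N2)) - 1)%Z. intros k Hk.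
    specialize (HN1 k ltac:(lia)). specialize (HN2 k ltac:(lia)).
    unfold xs in HN1, HN2. destruct (Z.ltb_spec k 0); try lia.
    pose proof (met_tri X d (iterZ f g k p) (iterZ f g k z) (iterZ f g k p') M) as T.
    rewrite (met_sym X d (iterZ f g k p) (iterZ f g k z) M) in T. lra.
  - intros e He. destruct (H1 (e/2)) as [N1 HN1]; try lra.
    destruct (H2 (e/2)) as [N2 HN2]; try lra.
    exists (Z.max 0 (Z.max N1 N2)). intros j Hj.
    specialize (HN1 (j + N)%Z ltac:(lia)). specialize (HN2 (j + N)%Z ltac:(lia)).
    unfold xs in HN1, HN2. destruct (Z.ltb_spec (j+N) 0); try lia.
    destruct (Z.ltb_spec (j+N) N); try lia.
    replace (j + N - N)%Z with j in HN1, HN2 by lia.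
    pose proof (met_tri X d (iterZ f g j q) (iterZ f g (j+N) z) (iterZ f g j q') M) as T.
    rewrite (met_sym X d (iterZ f g j q) (iterZ f g (j+N) z) M) in T. lra.
Qed.

Lemma shad_close X d (f g : X -> X) s x y p u q N z w eps :
  is_metric X d -> 0 <= eps -> (0 <= N)%Z ->
  Wu_c d f g eps x p -> Ws_c d f g eps y q ->
  Shad d f g s (xs f g p u q N) z -> Shad d f g s (xs f g x u y N) w ->
  forall k, d (iterZ f g k z) (iterZ f g k w) <= s + eps + s.
Proof.
  intros M He HN Hp Hq [Hz _] [Hw _] k.
  pose proof (xs_close X d f g x y p u q N eps k M He HN Hp Hq).
  specialize (Hz k); specialize (Hw k).
  rewrite (met_sym X d (iterZ f g k w) _ M) in Hw.
  pose proof (met_tri X d (iterZ f g k z) (xs f g p u q N k) (iterZ f g k w) M).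
  pose proof (met_tri X d (xs f g p u q N k) (xs f g x u y N k) (iterZ f g k w) M).
  lra.
Qed.

Lemma core X d (f g : X -> X) (n : nat) c dl eps x y u N E F :
  is_metric X d -> (forall x, f (g x) = x) -> 0 < c ->
  (forall w (E : list X), NoDup E ->
    (forall z, In z E -> Ws_c d f g c w z /\ Wu_c d f g c w z) -> (length E <= n)%nat) ->
  0 < dl ->
  (forall ys : Z -> X, pseudo_orbit d f dl ys -> limit_pseudo_orbit d f ys ->
      exists z, Shad d f g (c/4) ys z) ->
  0 < eps -> eps <= c / 4 -> eps <= dl / 8 -> (0 <= N)%Z ->
  d x u < dl / 4 -> d (iterZ f g N u) y < dl / 4 ->
  NoDup E -> (forall p, In p E -> Wu_c d f g eps x p) ->
  (forall p p', In p E -> In p' E -> p <> p' -> ~ Wu d f g p' p) ->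
  NoDup F -> (forall q, In q F -> Ws_c d f g eps y q) ->
  (forall q q', In q F -> In q' F -> q <> q' -> ~ Ws d f g q' q) ->
  (length E * length F <= n)%nat.
Proof.
  intros M Hfg Hc Hexp Hdl Hsh He Hec Hed HN Hu HuN HE HEu HEd HF HFs HFd.
  assert (Hex : forall pq : X * X, exists z, Wu_c d f g eps x (fst pq) -> Ws_c d f g eps y (snd pq) ->
            Shad d f g (c/4) (xs f g (fst pq) u (snd pq) N) z).
  { intros [p q]. simpl. destruct (classic (Wu_c d f g eps x p /\ Ws_c d f g eps y q)) as [[Hp Hq]|Hn].
    - destruct (Hsh (xs f g p u q N)) as [z Hz].
      + eapply xs_pseudo; eauto; lra.
      + apply xs_limit; auto.
      + exists z; auto.
    - exists x. intros; tauto. }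
  set (h := fun pq => proj1_sig (constructive_indefinite_description _ (Hex pq))).
  assert (Hh : forall pq, Wu_c d f g eps x (fst pq) -> Ws_c d f g eps y (snd pq) ->
            Shad d f g (c/4) (xs f g (fst pq) u (snd pq) N) (h pq)).
  { intros pq. unfold h. destruct (constructive_indefinite_description _ (Hex pq)). simpl. auto. }
  assert (Hxx : Wu_c d f g eps x x) by (intros k _; rewrite met_refl by auto; lra).
  assert (Hyy : Ws_c d f g eps y y) by (intros k _; rewrite met_refl by auto; lra).
  specialize (Hh (x, y) Hxx Hyy) as Hw. simpl in Hw.
  rewrite <- length_prod, <- (length_map h).
  apply (Hexp (h (x, y))).
  - apply Injective_map_NoDup_in; [|apply NoDup_prod; auto].
    intros [p q] [p' q'] I1 I2 Heq.
    apply in_prod_iff in I1, I2. destruct I1 as [I1p I1q], I2 as [I2p I2q].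
    pose proof (Hh (p, q) (HEu _ I1p) (HFs _ I1q)) as S1.
    pose proof (Hh (p', q') (HEu _ I2p) (HFs _ I2q)) as S2. simpl in S1, S2.
    rewrite Heq in S1.
    destruct (shad_inj X d f g (c/4) p u q p' q' N (h (p', q')) M HN S1 S2) as [W1 W2].
    destruct (classic (p = p')) as [->|Hpp]; [|exfalso; exact (HEd p p' I1p I2p Hpp W1)].
    destruct (classic (q = q')) as [->|Hqq]; [reflexivity|exfalso; exact (HFd q q' I1q I2q Hqq W2)].
  - intros z Hz. apply in_map_iff in Hz. destruct Hz as [[p q] [<- Hin]].
    apply in_prod_iff in Hin. destruct Hin as [Ip Iq].
    pose proof (Hh (p, q) (HEu _ Ip) (HFs _ Iq)) as S. simpl in S.
    pose proof (shad_close X d f g (c/4) x y p u q N (h (p, q)) (h (x, y)) eps M ltac:(lra) HN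
                  (HEu _ Ip) (HFs _ Iq) S Hw) as B.
    split; intros k _; specialize (B k); lra.
Qed.

Lemma ball_open X d (x : X) r : is_metric X d -> is_open d (fun z => d x z < r).
Proof.
  intros M z Hz. exists (r - d x z). split; [lra|]. intros w Hw.
  pose proof (met_tri X d x z w M). lra.
Qed.

Theorem theoremC (X : Type) (d : X -> X -> R) (f g : X -> X) (n : nat) :
  is_metric X d -> is_compact d -> homeo_with_inv d f g ->
  n_expansive d f g n -> L_shadowing d f g ->
  exists eps, 0 < eps /\
    (forall x, exists a b, n_unstable d f g x eps a /\ n_stable d f g x eps b /\
        (a * b <= n)%nat) /\
    (transitive d f ->
      forall x y, exists a b, n_unstable d f g x eps a /\ n_stable d f g y eps b /\
        (a * b <= n)%nat).
Proof.
  intros M _ [_ [_ [Hgf Hfg]]] [c [Hc Hexp]] HL.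
  destruct (HL (c/4)) as [dl [Hdl Hsh]]; [lra|].
  set (eps := Rmin (c/4) (dl/8)).
  assert (He : 0 < eps) by (unfold eps; apply Rmin_glb_lt; lra).
  assert (Hec : eps <= c/4) by apply Rmin_l.
  assert (Hed : eps <= dl/8) by apply Rmin_r.
  assert (Hsh' : forall ys : Z -> X, pseudo_orbit d f dl ys -> limit_pseudo_orbit d f ys ->
      exists z, Shad d f g (c/4) ys z) by (intros ys H1 H2; exact (Hsh ys H1 H2)).
  assert (Key : forall x y u N, (0 <= N)%Z -> d x u < dl/4 -> d (iterZ f g N u) y < dl/4 ->
     exists a b, n_unstable d f g x eps a /\ n_stable d f g y eps b /\ (a * b <= n)%nat).
  { intros x y u N HN Hu HuN.
    assert (Hxx : Wu_c d f g eps x x) by (intros k _; rewrite met_refl by auto; lra).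
    assert (Hyy : Ws_c d f g eps y y) by (intros k _; rewrite met_refl by auto; lra).
    assert (NE1 : NoDup [x]) by (constructor; [simpl; tauto|constructor]).
    assert (NF1 : NoDup [y]) by (constructor; [simpl; tauto|constructor]).
    set (PE := fun E : list X => (forall p, In p E -> Wu_c d f g eps x p) /\
                 forall p p', In p E -> In p' E -> p <> p' -> ~ Wu d f g p' p).
    set (PF := fun F : list X => (forall q, In q F -> Ws_c d f g eps y q) /\
                 forall q q', In q F -> In q' F -> q <> q' -> ~ Ws d f g q' q).
    assert (PE1 : PE [x]).
    { split. intros p [<-|[]]; auto. intros p p' [<-|[]] [<-|[]] H; tauto. }
    assert (PF1 : PF [y]).
    { split. intros p [<-|[]]; auto. intros p p' [<-|[]] [<-|[]] H; tauto. }
    assert (Cr : forall E F, NoDup E -> PE E -> NoDup F -> PF F -> (length E * length F <= n)%nat).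
    { intros E F HE [HE1 HE2] HF [HF1 HF2].
      eapply (core X d f g n c dl eps x y u N E F); eauto. }
    destruct (max_exists (fun j => exists E, NoDup E /\ PE E /\ length E = j) n)
      as [a [[Ea [Ea1 [Ea2 Ea3]]] Ha]].
    { exists 1%nat, [x]. auto. }
    { intros j [E [H1 [H2 <-]]]. pose proof (Cr E [y] H1 H2 NF1 PF1). simpl in H. lia. }
    destruct (max_exists (fun j => exists F, NoDup F /\ PF F /\ length F = j) n)
      as [b [[Fb [Fb1 [Fb2 Fb3]]] Hb]].
    { exists 1%nat, [y]. auto. }
    { intros j [F [H1 [H2 <-]]]. pose proof (Cr [x] F NE1 PE1 H1 H2). simpl in H. lia. }
    exists a, b. split; [|split].
    - split. exists Ea; auto. intros E H1 H2. apply Ha. exists E. auto.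
    - split. exists Fb; auto. intros F H1 H2. apply Hb. exists F. auto.
    - subst a b. apply Cr; auto. }
  exists eps. split; [exact He|split].
  - intros x. apply (Key x x x 0%Z); [lia| | simpl]; rewrite met_refl by auto; lra.
  - intros Htr x y.
    destruct (Htr (fun z => d x z < dl/4) (fun z => d y z < dl/4)) as [k [_ [u [Hu Hv]]]].
    + apply ball_open; auto.
    + apply ball_open; auto.
    + exists x. rewrite met_refl by auto; lra.
    + exists y. rewrite met_refl by auto; lra.
    + apply (Key x y u (Z.of_nat k)); [lia|auto|].
      rewrite iterZ_nonneg by lia. rewrite Nat2Z.id. rewrite met_sym by auto. exact Hv.
Qed.
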